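(* Let $G$ be a group generated by elements $x_1,\dots,x_n$ such that $[e]_g$ is a subgroup of $G$ for every $g\in G$. Then: (1) $\gamma_2(G)=[e]_{x_1}[e]_{x_2}\cdots[e]_{x_{n-1}}$ (a product of subgroups of $G$); (2) if $k\ge 1$ and $h_1,\dots,h_s\in G$ are such that $\gamma_k(G)=[e]_{h_1}[e]_{h_2}\cdots[e]_{h_s}$, and $p_{ij}=[x_i,h_j]$ for $i=1,\dots,n$, $j=1,\dots,s$, then $\gamma_{k+1}(G)=\prod_{i=1}^{n}\prod_{j=1}^{s}[e]_{p_{ij}}$.
   Context: $[x,y]=x^{-1}y^{-1}xy$. For $g\in G$, $[e]_g=\{[x,g]\mid x\in G\}$ (the twisted conjugacy class of the unit element for the inner automorphism $x\mapsto g^{-1}xg$). $\gamma_1(G)=G$, $\gamma_{k+1}(G)=[\gamma_k(G),G]$ is the lower central series. For subgroups $A_1,\dots,A_m$, $A_1\cdots A_m$ denotes the set of products $a_1\cdots a_m$ with $a_i\in A_i$. *)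

(* Defs.v *)
From Stdlib Require Import List Arith.
Import ListNotations.

Record group := Group {
  carrier :> Type;
  gmul : carrier -> carrier -> carrier;
  ginv : carrier -> carrier;
  gone : carrier;
  gmulA : forall a b c, gmul a (gmul b c) = gmul (gmul a b) c;
  gmul1l : forall a, gmul gone a = a;
  gmul1r : forall a, gmul a gone = a;
  gmulVl : forall a, gmul (ginv a) a = gone;
  gmulVr : forall a, gmul a (ginv a) = gone
}.

Arguments gmul {g}. Arguments ginv {g}. Arguments gone {g}.

Definition comm {G : group} (x y : G) : G :=
  gmul (gmul (ginv x) (ginv y)) (gmul x y).

(* [e]_g = { [x,g] | x in G } *)
Definition eclass {G : group} (g : G) : G -> Prop :=
  fun z => exists x : G, z = comm x g.

Definition is_subgroup {G : group} (S : G -> Prop) : Prop :=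
  S gone /\ (forall a b, S a -> S b -> S (gmul a b)) /\ (forall a, S a -> S (ginv a)).

Definition gen {G : group} (S : G -> Prop) : G -> Prop :=
  fun z => forall H : G -> Prop, is_subgroup H -> (forall a, S a -> H a) -> H z.

(* lcs k = gamma_{k+1}(G) *)
Fixpoint lcs {G : group} (k : nat) : G -> Prop :=
  match k with
  | 0 => fun _ => True
  | S k' => gen (fun z => exists a b : G, lcs k' a /\ z = comm a b)
  end.

(* gamma_k(G) for k >= 1 (gamma_1 = G, gamma_{k+1} = [gamma_k, G]);
   gamma 0 is set to G by convention and never used. *)
Definition gamma {G : group} (k : nat) : G -> Prop := lcs (pred k).

Fixpoint setprod {G : group} (l : list (G -> Prop)) : G -> Prop :=
  match l with
  | [] => fun z => z = gone
  | A :: l' => fun z => exists a b, A a /\ setprod l' b /\ z = gmul a b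
  end.

Definition set_eq {G : group} (A B : G -> Prop) : Prop := forall z, A z <-> B z.

(* Main.v *)
Require Import Defs.
From Stdlib Require Import List Arith Lia.
Import ListNotations.

Lemma mulKV {G : group} (a b : G) : gmul (ginv a) (gmul a b) = b.
Proof. rewrite gmulA, gmulVl, gmul1l; reflexivity. Qed.
Lemma mulVK {G : group} (a b : G) : gmul a (gmul (ginv a) b) = b.
Proof. rewrite gmulA, gmulVr, gmul1l; reflexivity. Qed.
Lemma mul_inj_l {G : group} (a b c : G) : gmul a b = gmul a c -> b = c.
Proof. intro H. rewrite <- (mulKV a b), H, mulKV. reflexivity. Qed.
Lemma inv_uniq {G : group} (a b : G) : gmul a b = gone -> b = ginv a.
Proof. intro H. apply (mul_inj_l a). rewrite H, gmulVr. reflexivity. Qed.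
Lemma inv_inv {G : group} (a : G) : ginv (ginv a) = a.
Proof. symmetry. apply inv_uniq. apply gmulVl. Qed.
Lemma inv_mul {G : group} (a b : G) : ginv (gmul a b) = gmul (ginv b) (ginv a).
Proof. symmetry. apply inv_uniq. rewrite <- gmulA, (gmulA _ b), gmulVr, gmul1l, gmulVr. reflexivity. Qed.
Lemma inv_one {G : group} : ginv (@gone G) = gone.
Proof. symmetry. apply inv_uniq. apply gmul1l. Qed.

Ltac gsimpl := unfold comm; repeat (rewrite ?inv_mul, ?inv_inv, ?inv_one, ?gmul1l, ?gmul1r, <- ?gmulA, ?mulKV, ?mulVK, ?gmulVl, ?gmulVr).

Definition conj {G : group} (u h : G) : G := gmul (gmul (ginv h) u) h.

Lemma c_mulr {G : group} (x g h : G) : comm x (gmul g h) = gmul (comm x h) (conj (comm x g) h).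
Proof. unfold conj; gsimpl; reflexivity. Qed.
Lemma c_mull {G : group} (x y g : G) : comm (gmul x y) g = gmul (conj (comm x g) y) (comm y g).
Proof. unfold conj; gsimpl; reflexivity. Qed.
Lemma c_invr {G : group} (x g : G) : comm x (ginv g) = conj (ginv (comm x g)) (ginv g).
Proof. unfold conj; gsimpl; reflexivity. Qed.
Lemma c_invl {G : group} (x g : G) : comm (ginv x) g = conj (ginv (comm x g)) (ginv x).
Proof. unfold conj; gsimpl; reflexivity. Qed.
Lemma c_swap {G : group} (a b : G) : comm a b = ginv (comm b a).
Proof. gsimpl; reflexivity. Qed.
Lemma c_conjE {G : group} (x g y : G) : conj (comm x g) y = gmul (comm (gmul x y) g) (ginv (comm y g)).
Proof. unfold conj; gsimpl; reflexivity. Qed.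
Lemma c_conjK {G : group} (z g y : G) : comm z (conj g y) = conj (comm (conj z (ginv y)) g) y.
Proof. unfold conj; gsimpl; reflexivity. Qed.
Lemma c_1r {G : group} (x : G) : comm x gone = gone.
Proof. gsimpl; reflexivity. Qed.
Lemma c_1l {G : group} (x : G) : comm gone x = gone.
Proof. gsimpl; reflexivity. Qed.
Lemma c_xx {G : group} (x : G) : comm x x = gone.
Proof. gsimpl; reflexivity. Qed.
Lemma conj1 {G : group} (y : G) : conj gone y = gone.
Proof. unfold conj; gsimpl; reflexivity. Qed.
Definition normal {G : group} (N : G -> Prop) : Prop :=
  is_subgroup N /\ forall u y, N u -> N (conj u y).

Lemma gen_sg {G : group} (S : G -> Prop) : is_subgroup (gen S).
Proof.
  unfold gen; split; [|split].
  - intros H [H1 _] _; exact H1.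
  - intros a b Ha Hb H HH HS. pose proof HH as [? [Hm ?]]. apply Hm; [apply Ha|apply Hb]; auto.
  - intros a Ha H HH HS. pose proof HH as [? [? Hi]]. apply Hi; apply Ha; auto.
Qed.
Lemma gen_in {G : group} (S : G -> Prop) z : S z -> gen S z.
Proof. intros Hz H _ HS. auto. Qed.

Lemma eclass_normal {G : group} (hsub : forall g : G, is_subgroup (eclass g)) (g : G) :
  normal (eclass g).
Proof.
  split; [apply hsub|]. intros u y [x ->].
  rewrite c_conjE. destruct (hsub g) as [_ [Hm Hi]].
  apply Hm. exists (gmul x y); reflexivity. apply Hi. exists y; reflexivity.
Qed.

Lemma setprod_one {G : group} (l : list (G -> Prop)) :
  (forall A, In A l -> A gone) -> setprod l gone.
Proof.
  induction l as [|A l IH]; simpl; intros H; [reflexivity|].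
  exists gone, gone. split; [apply H; left; reflexivity|]. split; [apply IH; intros; apply H; right; assumption|]. rewrite gmul1l; reflexivity.
Qed.

Lemma setprod_normal {G : group} (l : list (G -> Prop)) :
  (forall A, In A l -> normal A) -> normal (setprod l).
Proof.
  induction l as [|A l IH]; simpl; intros H.
  - split; [split; [reflexivity|split]|].
    + intros a b -> ->. apply gmul1l.
    + intros a ->. apply inv_one.
    + intros u y ->. apply conj1.
  - destruct (H A (or_introl eq_refl)) as [[A1 [Am Ai]] An].
    destruct (IH (fun B hB => H B (or_intror hB))) as [[L1 [Lm Li]] Ln].
    split; [split; [|split]|].
    + exists gone, gone; repeat split; auto. rewrite gmul1l; reflexivity.
    + intros z z' [a [b [Ha [Hb ->]]]] [a' [b' [Ha' [Hb' ->]]]].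
      exists (gmul a a'), (gmul (conj b a') b'). repeat split; auto.
      unfold conj; gsimpl; reflexivity.
    + intros z [a [b [Ha [Hb ->]]]].
      exists (ginv a), (conj (ginv b) (ginv a)). repeat split; auto.
      unfold conj; gsimpl; reflexivity.
    + intros z y [a [b [Ha [Hb ->]]]].
      exists (conj a y), (conj b y). repeat split; auto.
      unfold conj; gsimpl; reflexivity.
Qed.

Lemma setprod_sub {G : group} (l : list (G -> Prop)) (H : G -> Prop) :
  is_subgroup H -> (forall A, In A l -> forall z, A z -> H z) ->
  forall z, setprod l z -> H z.
Proof.
  intros [H1 [Hm Hi]]. induction l as [|A l IH]; simpl; intros HA z Hz.
  - subst; auto.
  - destruct Hz as [a [b [Ha [Hb ->]]]]. apply Hm.
    + apply (HA A (or_introl eq_refl)); auto.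
    + apply IH; [|exact Hb]. intros B hB; apply HA; right; exact hB.
Qed.

Lemma setprod_factor {G : group} (l : list (G -> Prop)) A z :
  (forall B, In B l -> B gone) -> In A l -> A z -> setprod l z.
Proof.
  induction l as [|B l IH]; simpl; intros H1 HA Hz; [contradiction|].
  destruct HA as [<- | HA].
  - exists z, gone. split; [exact Hz|]. split; [|rewrite gmul1r; reflexivity].
    apply setprod_one. intros; apply H1; right; assumption.
  - exists gone, z. split; [apply H1; left; reflexivity|]. split; [|rewrite gmul1l; reflexivity].
    apply IH; [intros; apply H1; right; assumption|exact HA|exact Hz].
Qed.

Definition Kset {G : group} (N : G -> Prop) : G -> Prop := fun g => forall z, N (comm z g).

Lemma sg_conj {G : group} (N : G -> Prop) u y : normal N -> N u -> N (conj u y).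
Proof. intros [_ Hn] Hu; auto. Qed.

Lemma Kset_normal {G : group} (N : G -> Prop) : normal N -> normal (Kset N).
Proof.
  intros HN. pose proof HN as [[N1 [Nm Ni]] Nn].
  split; [split; [|split]|]; unfold Kset.
  - intros z; rewrite c_1r; auto.
  - intros a b Ha Hb z. rewrite c_mulr. auto.
  - intros a Ha z. rewrite c_invr. auto.
  - intros u y Hu z. rewrite c_conjK. auto.
Qed.

Lemma Lset_sg {G : group} (N : G -> Prop) g : normal N -> is_subgroup (fun z => N (comm g z)).
Proof.
  intros HN. pose proof HN as [[N1 [Nm Ni]] Nn].
  split; [|split].
  - rewrite c_1r; auto.
  - intros a b Ha Hb. rewrite c_mulr. auto.
  - intros a Ha. rewrite c_invr. auto.
Qed.

Lemma sg_inv' {G : group} (N : G -> Prop) a : is_subgroup N -> N (ginv a) -> N a.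
Proof. intros [_ [_ Hi]] H. rewrite <- (inv_inv a). auto. Qed.

Lemma n1 {G : group} (N : G -> Prop) : normal N -> N gone.
Proof. intros [[H _] _]; exact H. Qed.
Lemma nM {G : group} (N : G -> Prop) a b : normal N -> N a -> N b -> N (gmul a b).
Proof. intros [[_ [H _]] _]; auto. Qed.
Lemma nV {G : group} (N : G -> Prop) a : normal N -> N a -> N (ginv a).
Proof. intros [[_ [_ H]] _]; auto. Qed.
Lemma nJ {G : group} (N : G -> Prop) a y : normal N -> N a -> N (conj a y).
Proof. intros [_ H]; auto. Qed.

Theorem theorem1 (G : group) (n : nat) (x : nat -> G)
  (hgen : forall z : G, gen (fun y => exists i, i < n /\ y = x i) z)
  (hsub : forall g : G, is_subgroup (eclass g)) :
  set_eq (gamma 2) (setprod (map (fun i => eclass (x i)) (seq 0 (n - 1))))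
  /\
  (forall (k s : nat) (h : nat -> G),
     1 <= k ->
     set_eq (gamma k) (setprod (map (fun j => eclass (h j)) (seq 0 s))) ->
     set_eq (gamma (k + 1))
       (setprod (flat_map (fun i => map (fun j => eclass (comm (x i) (h j))) (seq 0 s))
                          (seq 0 n)))).
Proof.
  assert (ind : forall P : G -> Prop, is_subgroup P -> (forall i, i < n -> P (x i)) -> forall z, P z).
  { intros P HP Hx z. apply (hgen z P HP). intros a [i [Hi ->]]. auto. }
  split.
  - set (M := setprod (map (fun i => eclass (x i)) (seq 0 (n - 1)))).
    assert (MN : normal M).
    { apply setprod_normal. intros A HA. apply in_map_iff in HA. destruct HA as [i [<- _]].
      apply eclass_normal; auto. }
    assert (M1 : forall A, In A (map (fun i => eclass (x i)) (seq 0 (n - 1))) -> A gone).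
    { intros A HA. apply in_map_iff in HA. destruct HA as [i [<- _]]. apply hsub. }
    assert (Mf : forall i z, i < n - 1 -> M (comm z (x i))).
    { intros i z Hi. apply (setprod_factor _ (eclass (x i))); auto.
      apply in_map_iff. exists i. split; auto. apply in_seq. lia.
      exists z; reflexivity. }
    assert (KM : forall b, Kset M b).
    { apply ind. apply (proj1 (Kset_normal M MN)).
      intros i Hi. destruct (Nat.lt_ge_cases i (n - 1)) as [Hl|Hg].
      - intros z. apply Mf; auto.
      - assert (Hin : i = n - 1) by lia. subst i.
        assert (L : forall z, M (comm (x (n-1)) z)).
        { apply ind. apply Lset_sg; auto.
          intros j Hj. destruct (Nat.lt_ge_cases j (n - 1)) as [Hl|Hg2].
          + apply Mf; auto.
          + assert (j = n - 1) by lia. subst j. rewrite c_xx. apply n1, MN. }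
        intros z. rewrite c_swap. apply nV; [exact MN|]. apply L. }
    intros z; split.
    + intros Hz. apply (Hz M (proj1 MN)). intros a [a0 [b [_ ->]]]. apply KM.
    + apply setprod_sub. apply gen_sg.
      intros A HA. apply in_map_iff in HA. destruct HA as [i [<- _]].
      intros z0 [y ->]. apply gen_in. exists y, (x i). split; [exact I|reflexivity].
  - intros k s h Hk Hgk. destruct k as [|k']; [lia|].
    rewrite Nat.add_1_r. unfold gamma in *. simpl pred in *.
    set (L := flat_map (fun i => map (fun j => eclass (comm (x i) (h j))) (seq 0 s)) (seq 0 n)).
    assert (HL : forall A, In A L -> exists i j, i < n /\ j < s /\ A = eclass (comm (x i) (h j))).
    { intros A HA. unfold L in HA. apply in_flat_map in HA. destruct HA as [i [Hi HA]].
      apply in_map_iff in HA. destruct HA as [j [<- Hj]]. apply in_seq in Hi. apply in_seq in Hj.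
      exists i, j. repeat split; lia. }
    assert (HL' : forall i j, i < n -> j < s -> In (eclass (comm (x i) (h j))) L).
    { intros i j Hi Hj. unfold L. apply in_flat_map. exists i. split; [apply in_seq; lia|].
      apply in_map_iff. exists j. split; [reflexivity|apply in_seq; lia]. }
    set (N := setprod L).
    assert (NN : normal N).
    { apply setprod_normal. intros A HA. destruct (HL A HA) as [i [j [_ [_ ->]]]].
      apply eclass_normal; auto. }
    assert (N1 : forall A, In A L -> A gone).
    { intros A HA. destruct (HL A HA) as [i [j [_ [_ ->]]]]. apply hsub. }
    assert (Hh1 : forall A, In A (map (fun j => eclass (h j)) (seq 0 s)) -> A gone).
    { intros A HA. apply in_map_iff in HA. destruct HA as [j [<- _]]. apply hsub. }
    intros z; split.
    + intros Hz. apply (Hz N (proj1 NN)). intros c [a [b [Ha ->]]].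
      rewrite c_swap. apply nV; [exact NN|].
      assert (KN := Kset_normal N NN).
      enough (Ka : Kset N a) by exact (Ka b).
      apply Hgk in Ha. revert a Ha. apply (setprod_sub _ (Kset N)).
      * apply KN.
      * intros A HA. apply in_map_iff in HA. destruct HA as [j [<- Hj]]. apply in_seq in Hj.
        intros c0 [y ->]. revert y. apply (ind (fun y => Kset N (comm y (h j)))).
        -- split; [|split].
           ++ rewrite c_1l. apply n1, KN.
           ++ intros a0 b0 Ha Hb. rewrite c_mull. apply nM; auto. apply nJ; auto.
           ++ intros a0 Ha. rewrite c_invl. apply nJ; auto. apply nV; auto.
        -- intros i Hi z0. apply (setprod_factor _ (eclass (comm (x i) (h j)))).
           exact N1. apply HL'; lia. exists z0; reflexivity.
    + apply setprod_sub. apply gen_sg.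
      intros A HA. destruct (HL A HA) as [i [j [Hi [Hj ->]]]].
      intros z0 [y ->]. rewrite c_swap. apply (gen_sg _). apply gen_in.
      exists (comm (x i) (h j)), y. split; [|reflexivity].
      apply Hgk. apply (setprod_factor _ (eclass (h j))); auto.
      apply in_map_iff. exists j. split; [reflexivity|apply in_seq; lia].
      exists (x i); reflexivity.
Qed.
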